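(* Let $\xi\in\mathbb R$ and let $(c_k)_{k\in\mathbb Z}$ be complex numbers with $|c_k|\le Ce^{-\delta|k|}$ for all $k$, for some $C,\delta>0$. Then for every $0<\varepsilon<\delta/2$ the series $\sum_{k\in\mathbb Z}c_k\rho_{\xi,k}$ converges in $H(S_{\delta/2-\varepsilon})$, i.e. uniformly on each set $\{z\in S_{\delta/2-\varepsilon}:|z|\le n\}$, $n\ge1$.
   Context: $\rho_1(z)=z\int_0^z e^{-s^2}ds$ is entire and even, so there is an entire $\rho_2$ with $\rho_1(z)=\rho_2(z^2)$. For $\xi\in\mathbb R$, $k\in\mathbb Z$, $\rho_{\xi,k}(z)=\frac2\pi\big(2e^{(\xi+ik)z}\rho_2((\xi+ik)z)+1\big)$. $S_\eta=\{z\in\mathbb C:|\operatorname{Im}z|\le\eta\}$; $H(\Omega)$ denotes the Fréchet space of holomorphic functions on $\Omega$ with seminorms $\|f\|_n=\sup\{|f(z)|:z\in\Omega,|z|\le n\}$. *)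

(* Defs.v *)
From Stdlib Require Import Reals ZArith ClassicalEpsilon.
From Coquelicot Require Import Coquelicot.
Open Scope R_scope.

Definition cexp (z : C) : C :=
  (exp (Re z) * cos (Im z), exp (Re z) * sin (Im z)).

(* erf-type integral along the segment [0,z]:
   int_0^z e^{-s^2} ds = int_0^1 z e^{-(t z)^2} dt  (entire integrand, so path-independent). *)
Definition cint_gauss (z : C) : C :=
  RInt (V := C_R_CompleteNormedModule)
       (fun t : R => Cmult z (cexp (Copp (Cmult (Cmult (RtoC t) z) (Cmult (RtoC t) z))))) 0 1.

Definition rho1 (z : C) : C := Cmult z (cint_gauss z).

(* rho_2 is the entire function with rho_1(z) = rho_2(z^2); since rho_1 is even,
   rho_2(w) = rho_1(sqrt w) for any square root of w. *)
Definition csqrt_choice (w : C) : C :=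
  epsilon (inhabits (RtoC 0)) (fun z : C => Cmult z z = w).
Definition rho2 (w : C) : C := rho1 (csqrt_choice w).

Definition rho (xi : R) (k : Z) (z : C) : C :=
  let a := Cmult (xi, IZR k) z in
  Cmult (RtoC (2 / PI))
        (Cplus (Cmult (RtoC 2) (Cmult (cexp a) (rho2 a))) (RtoC 1)).

Fixpoint sum_pos (f : Z -> C) (N : nat) : C :=
  match N with
  | O => f 0%Z
  | S n => Cplus (sum_pos f n) (f (Z.of_nat (S n)))
  end.
Fixpoint sum_neg (f : Z -> C) (M : nat) : C :=
  match M with
  | O => RtoC 0
  | S m => Cplus (sum_neg f m) (f (Z.opp (Z.of_nat (S m))))
  end.
Definition bisum (f : Z -> C) (M N : nat) : C := Cplus (sum_neg f M) (sum_pos f N).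

(* Main.v *)
Require Import Defs.
From Stdlib Require Import Reals ZArith Lra Psatz ClassicalEpsilon.
From Coquelicot Require Import Coquelicot.
Open Scope R_scope.

Lemma csqrt_exists (w : C) : exists z : C, Cmult z z = w.
Proof.
  destruct w as [a b].
  set (r := sqrt (a*a + b*b)).
  assert (Hr0 : 0 <= r) by apply sqrt_pos.
  assert (Hrr : r * r = a*a + b*b) by (apply sqrt_sqrt; nra).
  assert (Hra : Rabs a <= r).
  { apply Rabs_le; split; nra. }
  assert (H1 : 0 <= (r + a)/2) by (apply Rabs_le_between in Hra; lra).
  assert (H2 : 0 <= (r - a)/2) by (apply Rabs_le_between in Hra; lra).
  set (x := sqrt ((r+a)/2)). set (y0 := sqrt ((r-a)/2)).
  assert (Hx : x*x = (r+a)/2) by (apply sqrt_sqrt; lra).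
  assert (Hy : y0*y0 = (r-a)/2) by (apply sqrt_sqrt; lra).
  assert (Hxy : x*y0 = Rabs b / 2).
  { unfold x, y0. rewrite <- sqrt_mult by lra.
    replace ((r + a) / 2 * ((r - a) / 2)) with ((Rabs b / 2) * (Rabs b/2)).
    - apply sqrt_square. pose proof (Rabs_pos b); lra.
    - assert (Hbb : Rabs b * Rabs b = b * b) by (rewrite <- Rabs_mult; apply Rabs_pos_eq; nra). nra. }
  destruct (Rle_lt_dec 0 b) as [Hb|Hb].
  - exists (x, y0). unfold Cmult; simpl. f_equal; [nra|].
    rewrite Rabs_pos_eq in Hxy by lra. nra.
  - exists (x, - y0). unfold Cmult; simpl. f_equal; [nra|].
    rewrite Rabs_left in Hxy by lra. nra.
Qed.

Lemma csqrt_choice_spec (w : C) : Cmult (csqrt_choice w) (csqrt_choice w) = w.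
Proof.
  unfold csqrt_choice.
  apply (epsilon_spec (inhabits (RtoC 0)) (fun z : C => Cmult z z = w)).
  apply csqrt_exists.
Qed.

Lemma Cmod_cexp (v : C) : Cmod (cexp v) = exp (Re v).
Proof.
  unfold cexp, Cmod; simpl.
  pose proof (sin2_cos2 (Im v)) as H. unfold Rsqr in H.
  set (e := exp (Re v)). assert (He : 0 <= e) by (apply Rlt_le, exp_pos).
  replace (e * cos (Im v) * (e * cos (Im v) * 1) + e * sin (Im v) * (e * sin (Im v) * 1))
    with (e * e).
  - apply sqrt_square; auto.
  - transitivity (e * e * (sin (Im v) * sin (Im v) + cos (Im v) * cos (Im v))).
    + rewrite H; ring.
    + ring.
Qed.


Definition gint (u : C) (t : R) : C :=
  Cmult u (cexp (Copp (Cmult (Cmult (RtoC t) u) (Cmult (RtoC t) u)))).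

Lemma gint_ex (u : C) : ex_RInt (V := C_R_CompleteNormedModule) (gint u) 0 1.
Proof.
  destruct u as [a b].
  assert (H1 : ex_RInt (fun t => fst (gint (a,b) t)) 0 1).
  { apply (ex_RInt_continuous (V := R_CompleteNormedModule)). intros z _.
    apply (ex_derive_continuous (K := R_AbsRing) (V := R_NormedModule)).
    unfold gint, Cmult, cexp, Copp, RtoC, Re, Im; simpl. auto_derive. auto. }
  assert (H2 : ex_RInt (fun t => snd (gint (a,b) t)) 0 1).
  { apply (ex_RInt_continuous (V := R_CompleteNormedModule)). intros z _.
    apply (ex_derive_continuous (K := R_AbsRing) (V := R_NormedModule)).
    unfold gint, Cmult, cexp, Copp, RtoC, Re, Im; simpl. auto_derive. auto. }
  destruct H1 as [l1 H1]. destruct H2 as [l2 H2].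
  exists (l1, l2).
  apply (is_RInt_ext (V := C_R_CompleteNormedModule) (fun t => (fst (gint (a,b) t), snd (gint (a,b) t)))).
  - intros x _. destruct (gint (a,b) x); reflexivity.
  - apply (is_RInt_fct_extend_pair (U := R_NormedModule) (V := R_NormedModule)); auto.
Qed.

Lemma exp_mono (x y : R) : x <= y -> exp x <= exp y.
Proof.
  intros H. destruct (Rle_lt_or_eq_dec _ _ H) as [H'|H'].
  - left; apply exp_increasing; auto.
  - subst; lra.
Qed.


Lemma cint_bound (u : C) :
  Cmod (cint_gauss u) <= Cmod u * exp (Rabs (Re (Cmult u u))).
Proof.
  assert (HI := RInt_correct _ _ _ (gint_ex u)).
  assert (Hb := norm_RInt_le_const (V := C_R_NormedModule) (gint u) 0 1 (RInt (V := C_R_CompleteNormedModule) (gint u) 0 1)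
                 (Cmod u * exp (Rabs (Re (Cmult u u)))) ltac:(lra)).
  unfold cint_gauss. fold (gint u).
  rewrite Cmod_norm.
  replace (Cmod u * exp (Rabs (Re (Cmult u u)))) with ((1 - 0) * (Cmod u * exp (Rabs (Re (Cmult u u))))) by ring.
  apply Hb; [|exact HI].
  intros t Ht. rewrite <- Cmod_norm. unfold gint.
  rewrite Cmod_mult, Cmod_cexp.
  apply Rmult_le_compat_l; [apply Cmod_ge_0|].
  apply exp_mono.
  replace (Re (Copp (Cmult (Cmult (RtoC t) u) (Cmult (RtoC t) u)))) with (- (t*t) * Re (Cmult u u))
    by (destruct u; unfold Copp, Cmult, RtoC, Re; simpl; ring).
  set (x := Re (Cmult u u)).
  assert (0 <= t*t <= 1) by nra.
  destruct (Rle_dec 0 x).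
  - rewrite Rabs_pos_eq by lra. nra.
  - rewrite Rabs_left by lra. nra.
Qed.

Lemma rho2_bound (w : C) : Cmod (rho2 w) <= Cmod w * exp (Rabs (Re w)).
Proof.
  unfold rho2, rho1. set (u := csqrt_choice w).
  pose proof (csqrt_choice_spec w) as Hu. fold u in Hu.
  rewrite Cmod_mult.
  replace (Cmod w) with (Cmod u * Cmod u) by (rewrite <- Cmod_mult, Hu; auto).
  rewrite Rmult_assoc. apply Rmult_le_compat_l; [apply Cmod_ge_0|].
  rewrite <- Hu. apply cint_bound.
Qed.

Lemma Cmod_fst (c : C) : Rabs (fst c) <= Cmod c.
Proof. eapply Rle_trans; [|apply Rmax_Cmod]. apply Rmax_l. Qed.
Lemma Cmod_snd (c : C) : Rabs (snd c) <= Cmod c.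
Proof. eapply Rle_trans; [|apply Rmax_Cmod]. apply Rmax_r. Qed.

Lemma Cmod_le_sum (a b : R) : Cmod (a, b) <= Rabs a + Rabs b.
Proof.
  unfold Cmod; simpl.
  rewrite <- (sqrt_square (Rabs a + Rabs b)) by (pose proof (Rabs_pos a); pose proof (Rabs_pos b); lra).
  apply sqrt_le_1_alt.
  pose proof (Rabs_pos a); pose proof (Rabs_pos b).
  assert (Rabs a * Rabs a = a * a) by (rewrite <- Rabs_mult; apply Rabs_pos_eq; nra).
  assert (Rabs b * Rabs b = b * b) by (rewrite <- Rabs_mult; apply Rabs_pos_eq; nra).
  nra.
Qed.

Lemma rho_bound (xi : R) (k : Z) (z : C) :
  let w := Cmult (xi, IZR k) z in
  Cmod (rho xi k z) <= 2 / PI * (2 * (Cmod w * exp (2 * Rabs (Re w))) + 1).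
Proof.
  intros w. unfold rho. fold w.
  assert (HP : 0 < 2 / PI) by (pose proof PI_RGT_0; apply Rdiv_lt_0_compat; lra).
  rewrite Cmod_mult, Cmod_R, Rabs_pos_eq by lra.
  apply Rmult_le_compat_l; [lra|].
  eapply Rle_trans; [apply Cmod_triangle|].
  rewrite Cmod_1. apply Rplus_le_compat_r.
  rewrite Cmod_mult, Cmod_R, Rabs_pos_eq by lra.
  apply Rmult_le_compat_l; [lra|].
  rewrite Cmod_mult, Cmod_cexp.
  pose proof (rho2_bound w).
  replace (2 * Rabs (Re w)) with (Rabs (Re w) + Rabs (Re w)) by ring.
  rewrite exp_plus.
  assert (exp (Re w) <= exp (Rabs (Re w))) by (apply exp_mono, Rle_abs).
  pose proof (exp_pos (Re w)). pose proof (exp_pos (Rabs (Re w))).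
  pose proof (Cmod_ge_0 (rho2 w)). pose proof (Cmod_ge_0 w).
  nra.
Qed.

Lemma term_bound (xi : R) (c : Z -> C) (Cc delta eps nR : R) (k : Z) (z : C) :
  0 < Cc -> 0 < delta ->
  (forall k : Z, Cmod (c k) <= Cc * exp (- delta * IZR (Z.abs k))) ->
  0 < eps < delta / 2 -> 0 <= nR ->
  Rabs (Im z) <= delta / 2 - eps -> Cmod z <= nR ->
  Cmod (Cmult (c k) (rho xi k z)) <=
    Cc * (2 / PI) * (2 * (Rabs xi + / eps) * nR * exp (2 * Rabs xi * nR) + 1)
    * exp (- eps * IZR (Z.abs k)).
Proof.
  intros HC Hd Hc He HnR Himz Hmz.
  set (m := IZR (Z.abs k)).
  assert (Hm0 : 0 <= m) by (apply IZR_le; lia).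
  assert (Hkm : Rabs (IZR k) = m) by (unfold m; rewrite abs_IZR; auto).
  pose proof (rho_bound xi k z) as Hr. cbv zeta in Hr.
  set (w := Cmult (xi, IZR k) z) in Hr.
  assert (HRe : Rabs (Re w) <= Rabs xi * nR + m * (delta/2 - eps)).
  { unfold w. destruct z as [x y]. unfold Cmult, Re; simpl.
    simpl in Himz. pose proof (Cmod_fst (x,y)) as Hx. simpl in Hx.
    eapply Rle_trans; [apply Rabs_triang|]. rewrite Rabs_Ropp, !Rabs_mult, Hkm.
    pose proof (Rabs_pos xi). pose proof (Rabs_pos x). nra. }
  assert (HW : Cmod w <= (Rabs xi + m) * nR).
  { unfold w. rewrite Cmod_mult. pose proof (Cmod_le_sum xi (IZR k)). rewrite Hkm in H.
    pose proof (Cmod_ge_0 z). pose proof (Cmod_ge_0 (xi, IZR k)). nra. }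
  assert (HP : 0 < 2 / PI) by (pose proof PI_RGT_0; apply Rdiv_lt_0_compat; lra).
  assert (Hr2 : Cmod (rho xi k z) <= 2 / PI * (2 * ((Rabs xi + m) * nR * (exp (2 * Rabs xi * nR) * exp (m * (delta - 2*eps)))) + 1)).
  { eapply Rle_trans; [exact Hr|]. apply Rmult_le_compat_l; [lra|].
    apply Rplus_le_compat_r. apply Rmult_le_compat_l; [lra|].
    rewrite <- exp_plus. apply Rmult_le_compat; [apply Cmod_ge_0|apply Rlt_le, exp_pos|auto|].
    apply exp_mono. lra. }
  rewrite Cmod_mult.
  eapply Rle_trans.
  { apply Rmult_le_compat; [apply Cmod_ge_0|apply Cmod_ge_0|apply Hc|apply Hr2]. }
  fold m.
  set (E := exp (2 * Rabs xi * nR)).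
  set (p := exp (- eps * m)).
  assert (HE : 0 < E) by apply exp_pos.
  assert (Hp : 0 < p) by apply exp_pos.
  assert (Hpp : exp (- delta * m) * exp (m * (delta - 2 * eps)) = p * p)
    by (unfold p; rewrite <- !exp_plus; f_equal; ring).
  assert (Hdp : exp (- delta * m) <= p) by (apply exp_mono; nra).
  assert (Hmp : m * p <= / eps).
  { pose proof (exp_ineq1_le (eps * m)).
    assert (p * exp (eps * m) = 1) by (unfold p; rewrite <- exp_plus; replace (- eps * m + eps * m) with 0 by ring; apply exp_0).
    apply (Rmult_le_reg_l eps); [lra|]. rewrite Rinv_r by lra. nra. }
  assert (Hd0 : 0 < exp (- delta * m)) by apply exp_pos.
  set (X := exp (m * (delta - 2 * eps))) in *.
  set (D := exp (- delta * m)) in *.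
  set (a := Rabs xi). assert (0 <= a) by apply Rabs_pos.
  set (q := 2/PI) in *.
  assert (Hkey : (a + m) * (p * p) <= (a + / eps) * p).
  { assert (p <= 1) by (unfold p; rewrite <- exp_0; apply exp_mono; nra).
    replace ((a + m) * (p * p)) with (a * (p * p) + (m * p) * p) by ring.
    replace ((a + / eps) * p) with (a * p + / eps * p) by ring.
    apply Rplus_le_compat.
    - apply Rmult_le_compat_l; [lra|]. nra.
    - apply Rmult_le_compat_r; lra. }
  assert (Hinv : 0 < / eps) by (apply Rinv_0_lt_compat; lra).
  replace (Cc * D * (q * (2 * ((a + m) * nR * (E * X)) + 1)))
    with (Cc * q * (2 * nR * E * ((a + m) * (D * X)) + D)) by ring.
  rewrite Hpp.
  replace (Cc * q * (2 * (a + / eps) * nR * E + 1) * p)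
    with (Cc * q * (2 * nR * E * ((a + / eps) * p) + p)) by ring.
  apply Rmult_le_compat_l; [nra|].
  apply Rplus_le_compat; [|auto].
  apply Rmult_le_compat_l; [nra|auto].
Qed.

Lemma geom_step (u : nat -> R) (A q : R) :
  0 <= A -> 0 <= q < 1 ->
  (forall N, Rabs (u (S N) - u N) <= A * q ^ (S N)) ->
  forall N d, Rabs (u (d + N)%nat - u N) <= A * (q ^ (S N) - q ^ (S (d + N))) / (1 - q).
Proof.
  intros HA Hq Hu N d. induction d as [|d IH].
  - simpl. replace (u N - u N) with 0 by ring. rewrite Rabs_R0.
    unfold Rdiv. replace (q ^ N) with (q ^ N) by auto. 
    replace (q * q ^ N - q * q ^ N) with 0 by ring. rewrite Rmult_0_r, Rmult_0_l. lra.
  - replace (S d + N)%nat with (S (d + N)) by lia.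
    replace (u (S (d + N)) - u N) with ((u (S (d + N)) - u (d + N)%nat) + (u (d + N)%nat - u N)) by ring.
    eapply Rle_trans; [apply Rabs_triang|].
    eapply Rle_trans; [apply Rplus_le_compat; [apply Hu|apply IH]|].
    set (t := q ^ S (d + N)). set (Q := q ^ S N).
    change (q ^ S (S (d + N))) with (q * t).
    right. field. lra.
Qed.

Lemma geom_lim (u : nat -> R) (A q : R) :
  0 <= A -> 0 <= q < 1 ->
  (forall N, Rabs (u (S N) - u N) <= A * q ^ (S N)) ->
  forall N, Rabs (u N - real (Lim_seq u)) <= A * q ^ (S N) / (1 - q).
Proof.
  intros HA Hq Hu.
  assert (Hst : forall N M, (N <= M)%nat -> Rabs (u M - u N) <= A * q ^ (S N) / (1 - q)).
  { intros N M HNM. replace M with ((M - N) + N)%nat by lia.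
    eapply Rle_trans; [apply (geom_step u A q); auto|].
    unfold Rdiv. apply (Rmult_le_compat_r (/ (1 - q))); [left; apply Rinv_0_lt_compat; lra|].
    apply Rmult_le_compat_l; auto. pose proof (pow_le q (S (M - N + N)) ltac:(lra)). lra. }
  assert (Hc : ex_lim_seq_cauchy u).
  { intros [e He]. simpl.
    assert (Hy : 0 < e * (1 - q) / (2 * (A + 1))) by (apply Rdiv_lt_0_compat; nra).
    destruct (pow_lt_1_zero q ltac:(rewrite Rabs_pos_eq; lra) _ Hy) as [N HN].
    exists N. intros n m Hn Hm.
    assert (HqN : A * q ^ (S N) / (1 - q) < e / 2).
    { pose proof (HN (S N) ltac:(lia)) as H. rewrite Rabs_pos_eq in H by (apply pow_le; lra).
      pose proof (pow_le q (S N) ltac:(lra)).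
      apply (Rmult_lt_reg_r (1 - q)); [lra|]. unfold Rdiv. rewrite Rmult_assoc, Rinv_l by lra.
      rewrite Rmult_1_r.
      assert (e * (1 - q) / (2 * (A + 1)) * (A + 1) = e / 2 * (1 - q)) by (field; lra).
      nra. }
    replace (u n - u m) with ((u n - u N) - (u m - u N)) by ring.
    eapply Rle_lt_trans; [apply Rabs_triang|]. rewrite Rabs_Ropp.
    pose proof (Hst N n Hn). pose proof (Hst N m Hm). lra. }
  apply ex_lim_seq_cauchy_corr in Hc. destruct Hc as [l Hl].
  rewrite (is_lim_seq_unique _ _ Hl). simpl.
  intros N.
  assert (Hlim : is_lim_seq (fun M => Rabs (u M - u N)) (Rbar_abs (l - u N))).
  { apply is_lim_seq_abs. apply is_lim_seq_minus'; auto. apply is_lim_seq_const. }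
  pose proof (is_lim_seq_le_loc _ _ _ _
     (ltac:(exists N; intros M HM; apply (Hst N M HM)) : eventually (fun M => Rabs (u M - u N) <= A * q ^ (S N) / (1 - q)))
     Hlim (is_lim_seq_const (A * q ^ (S N) / (1 - q)))) as H.
  simpl in H. rewrite Rabs_minus_sym. exact H.
Qed.

Definition Clim (s : nat -> C) : C :=
  (real (Lim_seq (fun n => fst (s n))), real (Lim_seq (fun n => snd (s n)))).

Lemma geom_limC (s : nat -> C) (A q : R) :
  0 <= A -> 0 <= q < 1 ->
  (forall N, Cmod (Cminus (s (S N)) (s N)) <= A * q ^ (S N)) ->
  forall N, Cmod (Cminus (s N) (Clim s)) <= 2 * (A * q ^ (S N) / (1 - q)).
Proof.
  intros HA Hq Hs N.
  assert (H1 := geom_lim (fun n => fst (s n)) A q HA Hq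
     (fun N => Rle_trans _ _ _ (Cmod_fst (Cminus (s (S N)) (s N))) (Hs N)) N).
  assert (H2 := geom_lim (fun n => snd (s n)) A q HA Hq
     (fun N => Rle_trans _ _ _ (Cmod_snd (Cminus (s (S N)) (s N))) (Hs N)) N).
  eapply Rle_trans; [apply Cmod_2Rmax|].
  assert (Hs2 : sqrt 2 <= 2).
  { pose proof (sqrt_le_1_alt 2 (2*2) ltac:(lra)) as H. rewrite sqrt_square in H by lra. exact H. }
  assert (0 <= A * q ^ (S N) / (1 - q)).
  { apply Rmult_le_pos; [apply Rmult_le_pos; [auto|apply pow_le; lra]|left; apply Rinv_0_lt_compat; lra]. }
  apply Rmult_le_compat; [apply sqrt_pos| |auto|].
  - eapply Rle_trans; [|apply Rmax_l]. apply Rabs_pos.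
  - apply Rmax_lub; [exact H1|exact H2].
Qed.

Lemma Cminus_plus_l (a b : C) : Cminus (Cplus a b) a = b.
Proof. destruct a, b. unfold Cminus, Cplus, Copp; simpl. apply injective_projections; simpl; ring. Qed.

Lemma bisum_split (a b l1 l2 : C) :
  Cminus (Cplus a b) (Cplus l1 l2) = Cplus (Cminus a l1) (Cminus b l2).
Proof. destruct a, b, l1, l2. unfold Cminus, Cplus, Copp; simpl. apply injective_projections; simpl; ring. Qed.

Lemma exp_INR (x : R) (m : nat) : exp (x * INR m) = exp x ^ m.
Proof.
  induction m as [|m IH].
  - simpl. rewrite Rmult_0_r. apply exp_0.
  - rewrite S_INR. replace (x * (INR m + 1)) with (x + x * INR m) by ring.
    rewrite exp_plus, IH. reflexivity.
Qed.

Theorem lemma5 (xi : R) (c : Z -> C) (Cc delta : R) :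
  0 < Cc -> 0 < delta ->
  (forall k : Z, Cmod (c k) <= Cc * exp (- delta * IZR (Z.abs k))) ->
  forall eps : R, 0 < eps < delta / 2 ->
  exists F : C -> C,
    forall n : nat, (1 <= n)%nat ->
    forall eta : R, 0 < eta ->
    exists N0 : nat, forall M N : nat, (N0 <= M)%nat -> (N0 <= N)%nat ->
      forall z : C, Rabs (Im z) <= delta / 2 - eps -> Cmod z <= INR n ->
        Cmod (Cminus (bisum (fun k => Cmult (c k) (rho xi k z)) M N) (F z)) < eta.
Proof.
  intros HC Hd Hc eps He.
  exists (fun z => Cplus (Clim (sum_neg (fun k => Cmult (c k) (rho xi k z))))
                         (Clim (sum_pos (fun k => Cmult (c k) (rho xi k z))))).
  intros n Hn eta Heta.
  set (nR := INR n).
  assert (HnR : 0 <= nR) by apply pos_INR.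
  set (A := Cc * (2 / PI) * (2 * (Rabs xi + / eps) * nR * exp (2 * Rabs xi * nR) + 1)).
  assert (HP : 0 < 2 / PI) by (pose proof PI_RGT_0; apply Rdiv_lt_0_compat; lra).
  assert (HA : 0 <= A).
  { unfold A. pose proof (Rabs_pos xi). pose proof (exp_pos (2 * Rabs xi * nR)).
    assert (0 < / eps) by (apply Rinv_0_lt_compat; lra).
    apply Rmult_le_pos; [nra|]. assert (0 <= (Rabs xi + / eps) * nR) by nra. nra. }
  set (q := exp (- eps)).
  assert (Hq : 0 <= q < 1).
  { split; [apply Rlt_le, exp_pos|]. unfold q. rewrite <- exp_0. apply exp_increasing. lra. }
  assert (Hy : 0 < eta * (1 - q) / (4 * (A + 1))) by (apply Rdiv_lt_0_compat; nra).
  destruct (pow_lt_1_zero q ltac:(rewrite Rabs_pos_eq; lra) _ Hy) as [N0 HN0].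
  exists N0. intros M N HM HN z Himz Hmz.
  set (g := fun k => Cmult (c k) (rho xi k z)).
  assert (Hg : forall k, Cmod (g k) <= A * exp (- eps * IZR (Z.abs k))).
  { intros k. apply (term_bound xi c Cc delta eps nR k z); auto. }
  assert (Hpos : forall m, Cmod (Cminus (sum_pos g (S m)) (sum_pos g m)) <= A * q ^ (S m)).
  { intros m. change (sum_pos g (S m)) with (Cplus (sum_pos g m) (g (Z.of_nat (S m)))). rewrite Cminus_plus_l.
    eapply Rle_trans; [apply Hg|]. right. f_equal.
    rewrite Z.abs_eq by lia. rewrite <- INR_IZR_INZ.
    unfold q. rewrite <- exp_INR. reflexivity. }
  assert (Hneg : forall m, Cmod (Cminus (sum_neg g (S m)) (sum_neg g m)) <= A * q ^ (S m)).
  { intros m. change (sum_neg g (S m)) with (Cplus (sum_neg g m) (g (Z.opp (Z.of_nat (S m))))). rewrite Cminus_plus_l.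
    eapply Rle_trans; [apply Hg|]. right. f_equal.
    rewrite Z.abs_opp, Z.abs_eq by lia. rewrite <- INR_IZR_INZ.
    unfold q. rewrite <- exp_INR. reflexivity. }
  pose proof (geom_limC (sum_pos g) A q HA Hq Hpos N) as B1.
  pose proof (geom_limC (sum_neg g) A q HA Hq Hneg M) as B2.
  fold g. unfold bisum. rewrite bisum_split.
  eapply Rle_lt_trans; [apply Cmod_triangle|].
  assert (Hb : forall K, (N0 <= K)%nat -> 2 * (A * q ^ (S K) / (1 - q)) < eta / 2).
  { intros K HK. pose proof (HN0 (S K) ltac:(lia)) as H.
    rewrite Rabs_pos_eq in H by (apply pow_le; lra).
    pose proof (pow_le q (S K) ltac:(lra)).
    apply (Rmult_lt_reg_r (1 - q)); [lra|]. unfold Rdiv.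
    replace (2 * (A * q ^ S K * / (1 - q)) * (1 - q)) with (2 * (A * q ^ S K)) by (field; lra).
    assert (eta * (1 - q) / (4 * (A + 1)) * (A + 1) = eta * / 2 * (1 - q) / 2) by (field; lra).
    nra. }
  pose proof (Hb M HM). pose proof (Hb N HN). lra.
Qed.
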